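(* Let $\mathbb{F}$, $\mathfrak g$, $\mathcal C$, $\mathcal C^{du}$, $Nat$, $M$, $\mathbb F[M]$, $Lie(M)$ be as in the context. Then: (a) $M$ is a Zariski closed submonoid of $Nat$; (b) $\mathbb F[M]$ coincides with the restriction of $\mathbb F[Nat]$ to $M$; (c) the map $x\mapsto\delta_x$ is an isomorphism of Lie algebras from $Lie(M)$ onto $T_1M$, the Lie algebra of the weak algebraic monoid $(M,\mathbb F[M],\mathcal F_M)$.
   Context: Let $\mathbb F$ be a field of characteristic $0$, $\mathfrak g$ a Lie algebra over $\mathbb F$, $\mathcal C$ a full subcategory of $\mathfrak g$-modules closed under isomorphism and submodules, containing a direct sum and tensor product of any two objects and a one-dimensional trivial module, with $\mathfrak g$ acting faithfully. $x_V$ = action on $V$. Category of duals: point-separating $V^{du}\subseteq V^*$ with $\phi\circ x_V\in V^{du}$ ($x\in\mathfrak g$), $\psi\circ\alpha\in V^{du}$ for morphisms $\alpha:V\to W$, $\psi\in W^{du}$, $(V\oplus W)^{du}=V^{du}\oplus W^{du}$, $V^{du}\otimes W^{du}\subseteq(V\otimes W)^{du}$. $End_{V^{du}}(V)=\{\varphi:\phi\circ\varphi\in V^{du}\ \forall\phi\}$. $Nat$: families $(m_V)_V$, $m_V\in End_{V^{du}}(V)$, commuting with all morphisms of $\mathcal C$; an associative unital algebra and a Lie algebra. $\mathbb F[Nat]$ is the algebra of functions on $Nat$ generated by the linear functions $\tilde f_{\phi v}(m)=\phi(m_Vv)$ ($V$ object, $v\in V$, $\phi\in V^{du}$); Zariski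 topology = common zero sets of subsets of $\mathbb F[Nat]$. $M=\{m\in Nat:m_{V\otimes W}=m_V\otimes m_W,\ m_{V_0}=id$ on trivial one-dimensional $V_0\}$; $\mathbb F[M]=\{f_{\phi v}\}$ with $f_{\phi v}(m)=\phi(m_Vv)$. $Lie(M)=\{x\in Nat:x_{V\otimes W}=x_V\otimes id+id\otimes x_W,\ x_{V_0}=0,\ \exists\,\delta_x:\mathbb F[M]\to\mathbb F$ with $\delta_x(f_{\phi v})=\phi(x_Vv)\}$ with the commutator bracket of $Nat$; each $\delta_x$ is a derivation of $\mathbb F[M]$ at $1$. Filters: $\mathcal F_{Nat}$ is the set of ideals $J$ of $\mathbb F[Nat]$ containing the vanishing ideal $I_{Nat}(U)$ of some finite-dimensional linear subspace $U\subseteq Nat$; $\mathcal F_M=\{J|_M:J\in\mathcal F_{Nat}\}$ (restrictions to $M$). $T_1M$ is the space of derivations $\delta:\mathbb F[M]\to\mathbb F$ at $1$ (i.e. $\delta(fg)=f(1)\delta(g)+g(1)\delta(f)$) vanishing on some $J\in\mathcal F_M$. For $\delta\in T_1M$ let $D_\delta\in Der(\mathbb F[M])$ be $(D_\delta f)(m)=\delta(l_m^*f)$ with $(l_m^*f)(n)=f(mn)$; the Lie bracket on $T_1M$ is defined by $[\delta,\delta'](f)=([D_\delta,D_{\delta'}]f)(1)$ (this makes $(M,\mathbb F[M],\mathcal F_M)$ a weak algebraic monoid with Lie algebra $T_1M$). *)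

(* Defs.v *)
From HB Require Import structures.
From mathcomp Require Import all_boot all_algebra.

Unset Printing Implicit Defensive.

Import GRing.Theory.
Local Open Scope ring_scope.

Section Defs.
Variable F : fieldType.

Definition linmap {U W : lmodType F} (f : U -> W) :=
  forall (a : F) (x y : U), f (a *: x + y) = a *: f x + f y.
Definition linfun {U : lmodType F} (f : U -> F) :=
  forall (a : F) (x y : U), f (a *: x + y) = a * f x + f y.
Definition bilin {U V W : lmodType F} (b : U -> V -> W) :=
  (forall v, linmap (b^~ v)) /\ (forall u, linmap (b u)).

Definition lie_algebra {g : lmodType F} (br : g -> g -> g) :=
  bilin br /\ (forall x, br x x = 0) /\
  (forall x y z, br x (br y z) + br y (br z x) + br z (br x y) = 0).

Variable g : lmodType F.
Variable br : g -> g -> g.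

Record gmod := GMod { gcar :> lmodType F; gact : g -> gcar -> gcar }.
Arguments gact : clear implicits.

Definition is_gmod (V : gmod) :=
  bilin (gact V) /\
  (forall x y v, gact V (br x y) v = gact V x (gact V y v) - gact V y (gact V x v)).

Definition morph {V W : gmod} (f : V -> W) :=
  linmap f /\ forall x v, f (gact V x v) = gact W x (f v).

Definition is_tensor {V W T : lmodType F} (t : V -> W -> T) :=
  bilin t /\
  forall (U : lmodType F) (b : V -> W -> U), bilin b ->
    exists! f : T -> U, linmap f /\ forall v w, f (t v w) = b v w.

Definition tensor_obj {V W T : gmod} (t : V -> W -> T) :=
  is_tensor t /\
  forall x v w, gact T x (t v w) = t (gact V x v) w + t v (gact W x w).

Definition biprod {V W D : gmod} (i1 : V -> D) (i2 : W -> D) (p1 : D -> V) (p2 : D -> W) :=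
  morph i1 /\ morph i2 /\ morph p1 /\ morph p2 /\
  (forall v, p1 (i1 v) = v) /\ (forall w, p2 (i2 w) = w) /\
  (forall v, p2 (i1 v) = 0) /\ (forall w, p1 (i2 w) = 0) /\
  (forall d, i1 (p1 d) + i2 (p2 d) = d).

Definition trivial1 (V : gmod) :=
  (exists e : V, e <> 0 /\ forall v : V, exists a : F, v = a *: e) /\
  (forall x v, gact V x v = 0).

(** the category C: a class of g-modules, closed under isomorphism and
    submodules (= sources of injective morphisms), direct sums, tensor
    products, containing a trivial one-dimensional module, acting faithfully *)
Definition category (C : gmod -> Prop) :=
  (forall V, C V -> is_gmod V) /\
  (forall (V W : gmod) (f : W -> V), C V -> is_gmod W -> morph f -> injective f -> C W) /\
  (forall V W, C V -> C W -> exists D i1 i2 p1 p2, C D /\ @biprod V W D i1 i2 p1 p2) /\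
  (forall V W, C V -> C W -> exists T t, C T /\ @tensor_obj V W T t) /\
  (exists V0, C V0 /\ trivial1 V0) /\
  (forall x, (forall V, C V -> forall v : V, gact V x v = 0) -> x = 0).

Variable C : gmod -> Prop.
Variable du : forall V : gmod, (V -> F) -> Prop.

Definition dual_cat :=
  (forall V, C V -> forall phi, du V phi -> linfun phi) /\
  (forall V, C V -> du V (fun _ => 0) /\
     forall a phi psi, du V phi -> du V psi -> du V (fun v => a * phi v + psi v)) /\
  (forall V, C V -> forall v : V, v <> 0 -> exists phi, du V phi /\ phi v <> 0) /\
  (forall V, C V -> forall x phi, du V phi -> du V (phi \o gact V x)) /\
  (forall (V W : gmod) (al : V -> W), C V -> C W -> morph al ->
     forall psi, du W psi -> du V (psi \o al)) /\
  (forall V W D i1 i2 p1 p2, C V -> C W -> C D -> @biprod V W D i1 i2 p1 p2 ->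
     forall chi : D -> F,
       du D chi <-> exists phi psi, du V phi /\ du W psi /\
                                    chi = (fun d => phi (p1 d) + psi (p2 d))) /\
  (forall V W T t, C V -> C W -> C T -> @tensor_obj V W T t ->
     forall phi psi (chi : T -> F), du V phi -> du W psi -> linfun chi ->
       (forall v w, chi (t v w) = phi v * psi w) -> du T chi).

Definition NatT := forall V : gmod, C V -> V -> V.

Definition idN : NatT := fun V _ v => v.
Definition compN (m n : NatT) : NatT := fun V p v => m V p (n V p v).
Definition lincomb2 (a : F) (x y : NatT) : NatT := fun V p v => a *: x V p v + y V p v.
Definition brN (x y : NatT) : NatT :=
  fun V p v => x V p (y V p v) - y V p (x V p v).

Definition isNat (m : NatT) :=
  (forall V (p : C V), linmap (m V p) /\
      forall phi, du V phi -> du V (phi \o m V p)) /\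
  (forall (V W : gmod) (p : C V) (q : C W) (al : V -> W), morph al ->
      forall v, al (m V p v) = m W q (al v)).

Definition coef {V : gmod} (p : C V) (v : V) (phi : V -> F) : NatT -> F :=
  fun m => phi (m V p v).

Inductive FNat_gen : (NatT -> F) -> Prop :=
| FG_cst (a : F) : FNat_gen (fun _ => a)
| FG_coef (V : gmod) (p : C V) (v : V) (phi : V -> F) :
    du V phi -> FNat_gen (coef p v phi)
| FG_add f h : FNat_gen f -> FNat_gen h -> FNat_gen (fun m => f m + h m)
| FG_mul f h : FNat_gen f -> FNat_gen h -> FNat_gen (fun m => f m * h m).

Definition agreeNat (f h : NatT -> F) := forall m, isNat m -> f m = h m.
Definition inFNat (f : NatT -> F) := exists h, FNat_gen h /\ agreeNat f h.

Definition isM (m : NatT) :=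
  isNat m /\
  (forall V W T (p : C V) (q : C W) (r : C T) (t : V -> W -> T), tensor_obj t ->
     forall v w, m T r (t v w) = t (m V p v) (m W q w)) /\
  (forall V0 (p : C V0), trivial1 V0 -> forall v, m V0 p v = v).

Definition agreeM (f h : NatT -> F) := forall m, isM m -> f m = h m.

Definition inFM (f : NatT -> F) :=
  exists V (p : C V) (v : V) phi, du V phi /\ agreeM f (coef p v phi).

Definition respM (d : (NatT -> F) -> F) := forall f h, agreeM f h -> d f = d h.

(** d is the functional delta_x *)
Definition reprD (d : (NatT -> F) -> F) (x : NatT) :=
  respM d /\ forall V (p : C V) v phi, du V phi -> d (coef p v phi) = phi (x V p v).

Definition isLieM (x : NatT) :=
  isNat x /\
  (forall V W T (p : C V) (q : C W) (r : C T) (t : V -> W -> T), tensor_obj t ->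
     forall v w, x T r (t v w) = t (x V p v) w + t v (x W q w)) /\
  (forall V0 (p : C V0), trivial1 V0 -> forall v, x V0 p v = 0) /\
  (exists d, reprD d x).

Definition lincombN (us : seq NatT) (c : seq F) : NatT :=
  fun V p v => \sum_(i < size us) c`_i *: (nth idN us i) V p v.

Definition inSpan (us : seq NatT) (u : NatT) := exists c : seq F, u = lincombN us c.

Definition idealNat (J : (NatT -> F) -> Prop) :=
  (forall h, J h -> inFNat h) /\ J (fun _ => 0) /\
  (forall h h', J h -> J h' -> J (fun m => h m + h' m)) /\
  (forall h f, J h -> inFNat f -> J (fun m => f m * h m)) /\
  (forall h h', J h -> agreeNat h h' -> J h').

Definition filterNat (J : (NatT -> F) -> Prop) :=
  idealNat J /\
  exists us : seq NatT, (forall i, (i < size us)%N -> isNat (nth idN us i)) /\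
    (forall h, inFNat h -> (forall u, inSpan us u -> h u = 0) -> J h).

Definition isT1 (d : (NatT -> F) -> F) :=
  respM d /\
  (forall a f h, inFM f -> inFM h -> d (fun m => a * f m + h m) = a * d f + d h) /\
  (forall f h, inFM f -> inFM h -> d (fun m => f m * h m) = f idN * d h + h idN * d f) /\
  (exists J, filterNat J /\ forall h, J h -> d h = 0).

Definition Dop (d : (NatT -> F) -> F) (f : NatT -> F) : NatT -> F :=
  fun m => d (fun n => f (compN m n)).

Definition bracketT (d d' : (NatT -> F) -> F) : (NatT -> F) -> F :=
  fun f => Dop d (Dop d' f) idN - Dop d' (Dop d f) idN.

End Defs.
Arguments gact {F g} _ _ _.
Arguments is_gmod {F g} br V.
Arguments category {F g} br C.
Arguments dual_cat {F g} C du.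
Arguments NatT {F g} C.
Arguments idN {F g C} V _ v.
Arguments compN {F g C} m n V p v.
Arguments lincomb2 {F g C} a x y V p v.
Arguments brN {F g C} x y V p v.
Arguments isNat {F g} C du m.
Arguments isM {F g} C du m.
Arguments agreeM {F g} C du f h.
Arguments agreeNat {F g} C du f h.
Arguments inFNat {F g} C du f.
Arguments inFM {F g} C du f.
Arguments respM {F g} C du d.
Arguments reprD {F g} C du d x.
Arguments isLieM {F g} C du x.
Arguments isT1 {F g} C du d.
Arguments Dop {F g C} d f m.
Arguments bracketT {F g C} d d' f.
Arguments lie_algebra {F g} br.
Arguments linmap {F U W} f.
Arguments linfun {F U} f.
Arguments bilin {F U V W} b.
Arguments morph {F g V W} f.
Arguments is_tensor {F V W T} t.
Arguments tensor_obj {F g V W T} t.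
Arguments biprod {F g V W D} i1 i2 p1 p2.
Arguments trivial1 {F g} V.
Arguments coef {F g C V} p v phi m.
Arguments lincombN {F g C} us c V p v.
Arguments inSpan {F g C} us u.
Arguments idealNat {F g} C du J.
Arguments filterNat {F g} C du J.

(* Main.v *)
From HB Require Import structures.
Require Import Defs.
From mathcomp Require Import all_boot all_algebra.
From mathcomp Require Import ring.
From Stdlib Require Import ClassicalEpsilon FunctionalExtensionality PropExtensionality Classical.
Import GRing.Theory.
Local Open Scope ring_scope.
Set Implicit Arguments. Unset Strict Implicit.

Section Lin.
Variable F : fieldType.

Section LM.
Variables (U W : lmodType F) (f : U -> W).
Hypothesis Hf : Defs.linmap f.
Lemma lm0 : f 0 = 0.
Proof. have := Hf (-1) 0 0. by rewrite scaler0 addr0 scaleN1r addNr. Qed.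
Lemma lmD x y : f (x + y) = f x + f y.
Proof. by have := Hf 1 x y; rewrite !scale1r. Qed.
Lemma lmZ a x : f (a *: x) = a *: f x.
Proof. by have := Hf a x 0; rewrite addr0 lm0 addr0. Qed.
Lemma lmN x : f (- x) = - f x.
Proof. by rewrite -scaleN1r lmZ scaleN1r. Qed.
Lemma lmB x y : f (x - y) = f x - f y.
Proof. by rewrite lmD lmN. Qed.
Lemma lm_sum (I : Type) (r : seq I) (P : pred I) (G : I -> U) :
  f (\sum_(i <- r | P i) G i) = \sum_(i <- r | P i) f (G i).
Proof. apply: (big_morph f lmD lm0). Qed.
End LM.

Section LF.
Variables (U : lmodType F) (f : U -> F).
Hypothesis Hf : Defs.linfun f.
Lemma lf_lm : @Defs.linmap F U F^o f.
Proof. exact Hf. Qed.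
Lemma lf0 : f 0 = 0.
Proof. exact (lm0 lf_lm). Qed.
Lemma lfD x y : f (x + y) = f x + f y.
Proof. exact (lmD lf_lm x y). Qed.
Lemma lfZ a x : f (a *: x) = a * f x.
Proof. exact (lmZ lf_lm a x). Qed.
Lemma lfN x : f (- x) = - f x.
Proof. exact (lmN lf_lm x). Qed.
Lemma lfB x y : f (x - y) = f x - f y.
Proof. exact (lmB lf_lm x y). Qed.
Lemma lf_sum (I : Type) (r : seq I) (P : pred I) (G : I -> U) :
  f (\sum_(i <- r | P i) G i) = \sum_(i <- r | P i) f (G i).
Proof. exact (lm_sum lf_lm r P G). Qed.
End LF.

Section Tens.
Variables (V W T : lmodType F) (t : V -> W -> T).
Hypothesis Hb : Defs.bilin t.
Lemma tl0 w : t 0 w = 0. Proof. exact: (lm0 (Hb.1 w)). Qed.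
Lemma tr0 v : t v 0 = 0. Proof. exact: (lm0 (Hb.2 v)). Qed.
Lemma tlD v v' w : t (v + v') w = t v w + t v' w. Proof. exact: (lmD (Hb.1 w)). Qed.
Lemma trD v w w' : t v (w + w') = t v w + t v w'. Proof. exact: (lmD (Hb.2 v)). Qed.
Lemma tlZ a v w : t (a *: v) w = a *: t v w. Proof. exact: (lmZ (Hb.1 w)). Qed.
Lemma trZ a v w : t v (a *: w) = a *: t v w. Proof. exact: (lmZ (Hb.2 v)). Qed.
Lemma tlB v v' w : t (v - v') w = t v w - t v' w. Proof. exact: (lmB (Hb.1 w)). Qed.
Lemma trB v w w' : t v (w - w') = t v w - t v w'. Proof. exact: (lmB (Hb.2 v)). Qed.
Lemma tl_sum (I : Type) (r : seq I) (P : pred I) (G : I -> V) w :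
  t (\sum_(i <- r | P i) G i) w = \sum_(i <- r | P i) t (G i) w.
Proof. exact: (lm_sum (Hb.1 w)). Qed.
Lemma tr_sum (I : Type) (r : seq I) (P : pred I) (G : I -> W) v :
  t v (\sum_(i <- r | P i) G i) = \sum_(i <- r | P i) t v (G i).
Proof. exact: (lm_sum (Hb.2 v)). Qed.

Definition inS (s : T) := exists l : seq (V * W), s = \sum_(x <- l) t x.1 x.2.
Lemma inS0 : inS 0. Proof. by exists [::]; rewrite big_nil. Qed.
Lemma inSD s s' : inS s -> inS s' -> inS (s + s').
Proof. by move=> [l ->] [l' ->]; exists (l ++ l'); rewrite big_cat. Qed.
Lemma inSZ a s : inS s -> inS (a *: s).
Proof.
move=> [l ->]; exists (map (fun x => (a *: x.1, x.2)) l).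
by rewrite big_map scaler_sumr; apply: eq_bigr => x _ /=; rewrite tlZ.
Qed.
Lemma inSN s : inS s -> inS (- s).
Proof. by move=> H; rewrite -scaleN1r; apply: inSZ. Qed.
Lemma inSt v w : inS (t v w).
Proof. by exists [:: (v, w)]; rewrite big_seq1. Qed.

Lemma eqv_refl x : inS (x - x). Proof. by rewrite subrr; apply: inS0. Qed.
Lemma eqv_sym x y : inS (x - y) -> inS (y - x).
Proof. by move=> H; rewrite -opprB; apply: inSN. Qed.
Lemma eqv_trans x y z : inS (x - y) -> inS (y - z) -> inS (x - z).
Proof. by move=> H1 H2; have := inSD H1 H2; rewrite addrA subrK. Qed.
Lemma eqv_add x x' y y' : inS (x - x') -> inS (y - y') -> inS ((x + y) - (x' + y')).
Proof. by move=> H1 H2; have := inSD H1 H2; rewrite opprD addrACA. Qed.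
Lemma eqv_opp x y : inS (x - y) -> inS (- x - - y).
Proof. by move=> H; have := inSN H; rewrite opprB opprK addrC. Qed.
Lemma eqv_scale c x y : inS (x - y) -> inS (c *: x - c *: y).
Proof. by move=> H; have := inSZ c H; rewrite scalerBr. Qed.

Definition pr (x : T) : T := epsilon (inhabits (0 : T)) (fun y => inS (y - x)).
Lemma pr_spec x : inS (pr x - x).
Proof. apply: (epsilon_spec (inhabits (0:T)) (fun y => inS (y - x))). exists x; exact: eqv_refl. Qed.
Lemma pr_eq x y : inS (x - y) -> pr x = pr y.
Proof.
move=> H; rewrite /pr; congr epsilon; apply: functional_extensionality => z.
apply: propositional_extensionality; split => Hz.
- apply: eqv_trans Hz H.
- apply: eqv_trans Hz (eqv_sym H).
Qed.
Lemma prpr x : pr (pr x) == pr x.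
Proof. by apply/eqP; apply: pr_eq; apply: pr_spec. Qed.

Definition Q : Type := {x : T | pr x == x}.
HB.instance Definition _ := Choice.on Q.
Definition qv (a : Q) : T := proj1_sig a.
Definition qq (x : T) : Q := exist _ (pr x) (prpr x).
Lemma Qext (a b : Q) : qv a = qv b -> a = b.
Proof. case: a b => [x hx] [y hy] /= E; subst; congr exist; apply: bool_irrelevance. Qed.
Lemma qq_eq x y : inS (x - y) -> qq x = qq y.
Proof. by move=> H; apply: Qext => /=; apply: pr_eq. Qed.
Lemma qq_val (a : Q) : qq (qv a) = a.
Proof. by apply: Qext => /=; apply/eqP; case: a. Qed.

Definition Qadd (a b : Q) := qq (qv a + qv b).
Definition Qopp (a : Q) := qq (- qv a).
Definition Qzero := qq 0.
Definition Qscale (c : F) (a : Q) := qq (c *: qv a).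

Lemma eqv_qq x : inS (qv (qq x) - x). Proof. exact: pr_spec. Qed.
Lemma eqv_qq' x : inS (x - qv (qq x)). Proof. exact: eqv_sym (pr_spec x). Qed.

Lemma QaddA : associative Qadd.
Proof.
move=> a b c; apply: qq_eq.
apply: (eqv_trans (y := qv a + (qv b + qv c))).
  by apply: eqv_add (eqv_refl _) (eqv_qq _).
by rewrite [qv a + (_ + _)]addrA; apply: eqv_add (eqv_qq' _) (eqv_refl _).
Qed.
Lemma QaddC : commutative Qadd.
Proof. by move=> a b; rewrite /Qadd addrC. Qed.
Lemma Qadd0 : left_id Qzero Qadd.
Proof.
move=> a; rewrite -[RHS]qq_val; apply: qq_eq.
apply: (eqv_trans (y := 0 + qv a)); first exact: eqv_add (eqv_qq _) (eqv_refl _).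
by rewrite add0r; apply: eqv_refl.
Qed.
Lemma QaddN : left_inverse Qzero Qopp Qadd.
Proof.
move=> a; apply: qq_eq.
apply: (eqv_trans (y := - qv a + qv a)); first exact: eqv_add (eqv_qq _) (eqv_refl _).
rewrite addNr; exact: eqv_refl.
Qed.
HB.instance Definition _ := GRing.isZmodule.Build Q QaddA QaddC Qadd0 QaddN.

Lemma QscaleA a b v : Qscale a (Qscale b v) = Qscale (a * b) v.
Proof.
apply: qq_eq; rewrite -scalerA; apply: eqv_scale; exact: eqv_qq.
Qed.
Lemma Qscale1 : left_id 1 Qscale.
Proof. by move=> a; rewrite /Qscale scale1r qq_val. Qed.
Lemma QscaleDr : right_distributive Qscale (@GRing.add Q).
Proof.
move=> c a b; apply: qq_eq => /=.
apply: (eqv_trans (y := c *: (qv a + qv b))).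
  by apply: eqv_scale; apply: eqv_qq.
by rewrite scalerDr; apply: eqv_add; apply: eqv_qq'.
Qed.
Lemma QscaleDl v : {morph Qscale^~ v : a b / a + b}.
Proof.
move=> a b; apply: qq_eq => /=.
by rewrite scalerDl; apply: eqv_add; apply: eqv_qq'.
Qed.
HB.instance Definition _ := GRing.Zmodule_isLmodule.Build F Q QscaleA Qscale1 QscaleDr QscaleDl.

Lemma qq_lin : Defs.linmap qq.
Proof.
move=> a x y; apply: qq_eq => /=.
apply: eqv_add; last exact: eqv_qq'.
apply: (eqv_trans (y := a *: x)); first exact: eqv_refl.
apply: (eqv_trans (y := a *: qv (qq x))).
  by apply: eqv_scale; apply: eqv_qq'.
exact: eqv_qq'.
Qed.

Hypothesis Ht : Defs.is_tensor t.

Lemma tensor_span s : inS s.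
Proof.
have Hb0 : Defs.bilin (fun (_ : V) (_ : W) => (0 : Q)).
  by split => ? ? ? ?; rewrite scaler0 addr0.
have [f [_ Huniq]] := Ht.2 Q _ Hb0.
have E1 : f = qq.
  apply: Huniq; split; first exact: qq_lin.
  by move=> v w; rewrite -[RHS]/Qzero; apply: qq_eq; rewrite subr0; apply: inSt.
have E2 : f = (fun _ => 0).
  by apply: Huniq; split => // a x y; rewrite scaler0 addr0.
have : qq s = qq 0 by rewrite -E1 E2.
move/(congr1 qv) => /= E.
have H1 := eqv_sym (pr_spec s). rewrite E in H1.
by have := eqv_trans H1 (pr_spec 0); rewrite subr0.
Qed.


End Tens.

Section Sep.
Variables (V W T : lmodType F) (t : V -> W -> T).
Hypothesis Ht : Defs.is_tensor t.

Lemma prod_fun (phi : V -> F) (psi : W -> F) : Defs.linfun phi -> Defs.linfun psi ->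
  exists chi : T -> F, Defs.linfun chi /\ forall v w, chi (t v w) = phi v * psi w.
Proof.
move=> Hphi Hpsi.
have Hb : @Defs.bilin F V W F^o (fun v w => phi v * psi w).
  split.
  - move=> w a x y /=. by rewrite Hphi mulrDl -mulrA.
  - move=> v a x y /=. rewrite Hpsi mulrDr mulrCA. done.
have [f [[Hf Hft] _]] := Ht.2 F^o _ Hb.
by exists f; split.
Qed.

Variables (DV : (V -> F) -> Prop) (DW : (W -> F) -> Prop).
Hypothesis HV : forall phi, DV phi -> Defs.linfun phi.
Hypothesis HW : forall psi, DW psi -> Defs.linfun psi.
Hypothesis sepV : forall v, v <> 0 -> exists phi, DV phi /\ phi v <> 0.
Hypothesis sepW : forall w, w <> 0 -> exists psi, DW psi /\ psi w <> 0.

Lemma tensor_sep s :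
  (forall phi psi chi, DV phi -> DW psi -> Defs.linfun chi ->
     (forall v w, chi (t v w) = phi v * psi w) -> chi s = 0) -> s = 0.
Proof.
move=> Hs.
have Hsum : forall n (vs : 'I_n -> V) (ws : 'I_n -> W), s = \sum_(i < n) t (vs i) (ws i) ->
   forall phi psi, DV phi -> DW psi -> \sum_(i < n) phi (vs i) * psi (ws i) = 0.
  move=> n vs ws E phi psi Hphi Hpsi.
  have [chi [Hchi Hct]] := prod_fun (HV Hphi) (HW Hpsi).
  have := Hs phi psi chi Hphi Hpsi Hchi Hct.
  rewrite E (lf_sum Hchi). by under eq_bigr do rewrite Hct.
have Hb := Ht.1.
suff main : forall n (vs : 'I_n -> V) (ws : 'I_n -> W), s = \sum_(i < n) t (vs i) (ws i) -> s = 0.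
  have [l El] := tensor_span Hb Ht s.
  apply: (main (size l) (fun i => (nth (0,0) l i).1) (fun i => (nth (0,0) l i).2)).
  by rewrite El (big_nth (0,0)) big_mkord.
elim=> [|n IH] vs ws E; first by rewrite E big_ord0.
case: (classic (exists a : 'I_n.+1 -> F, (exists j, a j != 0) /\ \sum_(i < n.+1) a i *: vs i = 0)).
- move=> [a [[j Hj] Ha]].
  rewrite (bigD1_ord j) //= in Ha.
  pose b i := - (a (lift j i) / a j).
  have Evj : vs j = \sum_(i < n) b i *: vs (lift j i).
    apply: (scalerI Hj).
    rewrite scaler_sumr; apply/eqP; rewrite -subr_eq0 -[X in _ - X]opprK opprK; apply/eqP.
    have -> : \sum_(i < n) a j *: (b i *: vs (lift j i)) = - \sum_(i < n) a (lift j i) *: vs (lift j i).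
      rewrite -sumrN; apply: eq_bigr => i _.
      by rewrite /b scalerA mulrN mulrCA mulfV // mulr1 scaleNr.
    by rewrite opprK.
  apply: (IH (fun i => vs (lift j i)) (fun i => ws (lift j i) + b i *: ws j)).
  rewrite E (bigD1_ord j) //= Evj (tl_sum Hb) -big_split /=.
  apply: eq_bigr => i _; by rewrite (trD Hb) (tlZ Hb) -(trZ Hb) addrC.
- move=> Hind.
  have Hw : forall i, ws i = 0.
    move=> i; apply: NNPP => Hwi.
    have [psi [Hpsi Hpsii]] := sepW Hwi.
    apply: Hind; exists (fun k => psi (ws k)); split; first by exists i; apply/eqP.
    apply: NNPP => Hu.
    have [phi [Hphi Hphiu]] := sepV Hu.
    apply: Hphiu; rewrite (lf_sum (HV Hphi)) -[RHS](Hsum _ vs ws E phi psi Hphi Hpsi).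
    by apply: eq_bigr => k _; rewrite (lfZ (HV Hphi)) mulrC.
  by rewrite E; apply: big1 => i _; rewrite Hw (tr0 Hb).
Qed.
End Sep.

Section LinAlg.
Variables (X : Type) (comb : F -> X -> X -> X).
Definition clin (h : X -> F) := forall a x y, h (comb a x y) = a * h x + h y.
Definition g0 : X -> F := fun _ => 0.

Lemma linalg (gs : seq (X -> F)) (f : X -> F) :
  clin f -> (forall i, clin (nth g0 gs i)) ->
  (forall x, (forall i, (i < size gs)%N -> nth g0 gs i x = 0) -> f x = 0) ->
  exists c : seq F, forall x, f x = \sum_(i < size gs) c`_i * nth g0 gs i x.
Proof.
elim: gs f => [|g gs IH] f Hf Hgs Hker.
  by exists [::] => x; rewrite big_ord0; apply: Hker.
have Hgs' : forall i, clin (nth g0 gs i) by move=> i; apply: (Hgs i.+1).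
have Hg : clin g by apply: (Hgs 0%N).
case: (classic (exists x0, (forall i, (i < size gs)%N -> nth g0 gs i x0 = 0) /\ g x0 <> 0)).
- move=> [x0 [H0 Hg0]].
  pose k := f x0 / g x0.
  pose f' := fun x => f x - k * g x.
  have Hf' : clin f'.
    move=> a x y; rewrite /f' Hf Hg; ring.
  have Hker' : forall x, (forall i, (i < size gs)%N -> nth g0 gs i x = 0) -> f' x = 0.
    move=> x Hx.
    pose x' := comb (- (g x / g x0)) x0 x.
    have Hx' : f x' = 0.
      apply: Hker => -[|i] Hi /=.
        rewrite /x' Hg; field; exact/eqP.
      by rewrite /x' Hgs' H0 // Hx // mulr0 addr0.
    move: Hx'; rewrite /x' Hf /f' /k => Hx'.
    have -> : f x = g x / g x0 * f x0 by apply/eqP; rewrite -subr_eq0 -Hx'; apply/eqP; ring.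
    field; exact/eqP.
  have [c Hc] := IH f' Hf' Hgs' Hker'.
  exists (k :: c) => x /=; rewrite big_ord_recl /=.
  under eq_bigr => i _ do rewrite add0n.
  rewrite -Hc /f'; ring.
- move=> Hn.
  have Hker' : forall x, (forall i, (i < size gs)%N -> nth g0 gs i x = 0) -> f x = 0.
    move=> x Hx; apply: Hker => -[|i] Hi /=; last exact: Hx.
    apply: NNPP => Hgx; apply: Hn; by exists x.
  have [c Hc] := IH f Hf Hgs' Hker'.
  exists (0 :: c) => x /=; rewrite big_ord_recl /= mul0r add0r Hc.
  by under [RHS]eq_bigr => i _ do rewrite add0n.
Qed.
End LinAlg.

Lemma natr_inj0 (H : [pchar F] =i pred0) m n : (m%:R : F) = n%:R -> m = n.
Proof.
have Hc := (pcharf0P F).1 H.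
wlog le : m n / (m <= n)%N.
  move=> W E; case: (leqP m n) => h; first exact: W.
  by symmetry; apply: W (ltnW h) (esym E).
move=> E; have := Hc (n - m)%N; rewrite natrB // E subrr eqxx => /esym.
by rewrite subn_eq0 => h; apply/eqP; rewrite eqn_leq le h.
Qed.

Lemma poly_zero (H : [pchar F] =i pred0) (P : {poly F}) : (forall s, P.[s] = 0) -> P = 0.
Proof.
move=> HP; apply/eqP; apply: contraT => nz.
have := @max_poly_roots F P [seq i%:R | i <- iota 0 (size P)] nz.
rewrite size_map size_iota ltnn; apply.
  by apply/allP => y /mapP [i _ ->]; rewrite /root HP.
by rewrite map_inj_in_uniq ?iota_uniq // => i j _ _; apply: natr_inj0.
Qed.
End Lin.

Unset Implicit Arguments.
Section Main.
Variables (F : fieldType) (g : lmodType F) (br : g -> g -> g)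
  (C : gmod F g -> Prop) (du : forall V : gmod F g, (V -> F) -> Prop).
Hypothesis Hcat : category br C.
Hypothesis Hdu : dual_cat C du.

Lemma du_lin {V : gmod F g} (p : C V) {phi} : du V phi -> Defs.linfun phi.
Proof. exact: (Hdu.1 V p phi). Qed.
Lemma du_zero {V : gmod F g} (p : C V) : du V (fun _ => 0).
Proof. exact: (Hdu.2.1 V p).1. Qed.
Lemma du_comb {V : gmod F g} (p : C V) a {phi psi} : du V phi -> du V psi -> du V (fun v => a * phi v + psi v).
Proof. exact: (Hdu.2.1 V p).2. Qed.
Lemma du_sep {V : gmod F g} (p : C V) {v : V} : v <> 0 -> exists phi, du V phi /\ phi v <> 0.
Proof. exact: (Hdu.2.2.1 V p v). Qed.
Lemma du_ext {V : gmod F g} {phi : V -> F} (psi : V -> F) : du V phi -> (forall v, phi v = psi v) -> du V psi.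
Proof. by move=> H E; have -> : psi = phi by apply: functional_extensionality => v; rewrite E. Qed.
Lemma du_scale {V : gmod F g} (p : C V) a {phi} : du V phi -> du V (fun v => a * phi v).
Proof. move=> H; apply: du_ext (du_comb p a H (du_zero p)) _ => v; by rewrite addr0. Qed.
Lemma du_add {V : gmod F g} (p : C V) {phi psi} : du V phi -> du V psi -> du V (fun v => phi v + psi v).
Proof. move=> H1 H2; apply: du_ext (du_comb p 1 H1 H2) _ => v; by rewrite mul1r. Qed.
Lemma du_sum {V : gmod F g} (p : C V) {n} (hs : 'I_n -> V -> F) : (forall i, du V (hs i)) ->
  du V (fun v => \sum_(i < n) hs i v).
Proof.
elim: n hs => [|n IH] hs H.
  by apply: du_ext (du_zero p) _ => v; rewrite big_ord0.
apply: du_ext (du_add p (IH (fun i => hs (lift ord0 i)) (fun i => H _)) (H ord0)) _ => v.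
by rewrite big_ord_recl addrC.
Qed.

Lemma sep_eq {V : gmod F g} (p : C V) (v w : V) : (forall phi, du V phi -> phi v = phi w) -> v = w.
Proof.
move=> H; apply/eqP; rewrite -subr_eq0; apply/eqP; apply: NNPP => Hn.
have [phi [Hphi Hne]] := du_sep p Hn; apply: Hne.
by rewrite (lfB (du_lin p Hphi)) H // subrr.
Qed.

Lemma isNat_id : isNat C du idN.
Proof.
split; last by [].
move=> V p; split; first by [].
by move=> phi H.
Qed.

Lemma isNat_lin {m : NatT C} {V : gmod F g} (p : C V) : isNat C du m -> Defs.linmap (m V p).
Proof. by move=> H; exact: (H.1 V p).1. Qed.
Lemma isNat_du {m : NatT C} {V : gmod F g} (p : C V) {phi} : isNat C du m -> du V phi -> du V (phi \o m V p).
Proof. by move=> H; exact: (H.1 V p).2. Qed.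
Lemma isNat_nat {m : NatT C} {V W : gmod F g} (p : C V) (q : C W) {al : V -> W} :
  isNat C du m -> morph al -> forall v, al (m V p v) = m W q (al v).
Proof. by move=> H; exact: H.2 V W p q al. Qed.

Lemma isNat_comp m n : isNat C du m -> isNat C du n -> isNat C du (compN m n).
Proof.
move=> Hm Hn; split.
  move=> V p; split.
    by move=> a x y; rewrite /compN (isNat_lin p Hn) (isNat_lin p Hm).
  by move=> phi H; apply: (isNat_du p Hn (isNat_du p Hm H)).
move=> V W p q al Hal v; rewrite /compN.
by rewrite (isNat_nat p q Hm Hal) (isNat_nat p q Hn Hal).
Qed.

Lemma morph_lin {V W : gmod F g} {al : V -> W} : morph al -> Defs.linmap al.
Proof. by case. Qed.

Lemma isNat_lincomb2 a x y : isNat C du x -> isNat C du y -> isNat C du (lincomb2 a x y).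
Proof.
move=> Hx Hy; split.
  move=> V p; split.
    move=> b u w; rewrite /lincomb2 (isNat_lin p Hx) (isNat_lin p Hy).
    by rewrite !scalerDr !scalerA [b * a]mulrC addrACA.
  move=> phi H.
  apply: du_ext (du_comb p a (isNat_du p Hx H) (isNat_du p Hy H)) _ => v /=.
  by rewrite /lincomb2 (lfD (du_lin p H)) (lfZ (du_lin p H)).
move=> V W p q al Hal v; rewrite /lincomb2.
by rewrite (lmD (morph_lin Hal)) (lmZ (morph_lin Hal)) (isNat_nat p q Hx Hal) (isNat_nat p q Hy Hal).
Qed.

Lemma isNat_brN x y : isNat C du x -> isNat C du y -> isNat C du (brN x y).
Proof.
move=> Hx Hy; split.
  move=> V p; split.
    move=> b u w; rewrite /brN (isNat_lin p Hx) (isNat_lin p Hy) (isNat_lin p Hx) (isNat_lin p Hy).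
    by rewrite scalerBr addrACA opprD.
  move=> phi H.
  have H1 := isNat_du p Hy (isNat_du p Hx H).
  have H2 := isNat_du p Hx (isNat_du p Hy H).
  apply: du_ext (du_comb p (-1) H2 H1) _ => v /=.
  by rewrite /brN (lfB (du_lin p H)) mulN1r addrC.
move=> V W p q al Hal v; rewrite /brN.
by rewrite (lmB (morph_lin Hal)) (isNat_nat p q Hx Hal) (isNat_nat p q Hy Hal)
   (isNat_nat p q Hy Hal) (isNat_nat p q Hx Hal).
Qed.

Lemma isNat_lincombN us c : (forall i, (i < size us)%N -> isNat C du (nth idN us i)) ->
  isNat C du (lincombN us c).
Proof.
move=> Hus.
have Hall : forall i, isNat C du (nth idN us i).
  move=> i; case: (ltnP i (size us)) => h; first exact: Hus.
  by rewrite nth_default //; apply: isNat_id.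
split.
  move=> V p; split.
    move=> b u w; rewrite /lincombN scaler_sumr -big_split /=; apply: eq_bigr => i _.
    by rewrite (isNat_lin p (Hall i)) scalerDr !scalerA mulrC.
  move=> phi H.
  apply: du_ext (du_sum p (fun i v => c`_i * (phi \o nth idN us i V p) v) _) _.
    by move=> i; apply: (du_scale p); apply: (isNat_du p (Hall i) H).
  by move=> v /=; rewrite /lincombN (lf_sum (du_lin p H)); apply: eq_bigr => i _; rewrite (lfZ (du_lin p H)).
move=> V W p q al Hal v; rewrite /lincombN (lm_sum (morph_lin Hal)); apply: eq_bigr => i _.
by rewrite (lmZ (morph_lin Hal)) (isNat_nat p q (Hall i) Hal).
Qed.


Lemma cat_sum {V W : gmod F g} (p : C V) (q : C W) :
  exists D i1 i2 p1 p2, C D /\ @biprod F g V W D i1 i2 p1 p2.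
Proof. exact: (Hcat.2.2.1 V W p q). Qed.
Lemma cat_ten {V W : gmod F g} (p : C V) (q : C W) :
  exists T t, C T /\ @tensor_obj F g V W T t.
Proof. exact: (Hcat.2.2.2.1 V W p q). Qed.
Lemma cat_triv : exists V0, C V0 /\ trivial1 V0.
Proof. exact: (Hcat.2.2.2.2.1). Qed.

Lemma du_biprod {V W D : gmod F g} (p : C V) (q : C W) (r : C D) {i1 i2 p1 p2} :
  @biprod F g V W D i1 i2 p1 p2 -> forall chi, du D chi <->
  exists phi psi, du V phi /\ du W psi /\ chi = (fun d => phi (p1 d) + psi (p2 d)).
Proof. exact: (Hdu.2.2.2.2.2.1 V W D i1 i2 p1 p2 p q r). Qed.
Lemma du_tensor {V W T : gmod F g} (p : C V) (q : C W) (r : C T) {t} :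
  @tensor_obj F g V W T t -> forall phi psi (chi : T -> F), du V phi -> du W psi -> Defs.linfun chi ->
  (forall v w, chi (t v w) = phi v * psi w) -> du T chi.
Proof. exact: (Hdu.2.2.2.2.2.2 V W T t p q r). Qed.

Definition tmul (m : NatT C) := forall V W T (p : C V) (q : C W) (r : C T) (t : V -> W -> T),
  tensor_obj t -> forall v w, m T r (t v w) = t (m V p v) (m W q w).
Definition tder (x : NatT C) := forall V W T (p : C V) (q : C W) (r : C T) (t : V -> W -> T),
  tensor_obj t -> forall v w, x T r (t v w) = t (x V p v) w + t v (x W q w).

Lemma isM_Nat {m} : isM C du m -> isNat C du m. Proof. by case. Qed.
Lemma isM_mul {m} : isM C du m -> tmul m. Proof. by case=> _ []. Qed.

Lemma comb_coef {V W : gmod F g} (p : C V) (q : C W) (v : V) (w : W) phi psi a :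
  du V phi -> du W psi ->
  exists D (r : C D) (u : D) chi, du D chi /\
    forall m, isNat C du m -> coef r u chi m = a * coef p v phi m + coef q w psi m.
Proof.
move=> Hphi Hpsi.
have [D [i1 [i2 [p1 [p2 [r Hb]]]]]] := cat_sum p q.
have Hb' := Hb.
move: Hb' => [Hi1 [Hi2 [Hp1 [Hp2 [E11 [E22 [E21 [E12 Esum]]]]]]]].
exists D, r, (i1 v + i2 w), (fun z => a * phi (p1 z) + psi (p2 z)); split.
  apply: (proj2 (du_biprod p q r Hb _)); exists (fun v => a * phi v), psi; split; first exact: du_scale.
  by split.
move=> m Hm; rewrite /coef.
rewrite (lmD (isNat_lin r Hm)) -(isNat_nat p r Hm Hi1) -(isNat_nat q r Hm Hi2).
by rewrite (lmD (morph_lin Hp1)) (lmD (morph_lin Hp2)) E11 E22 E21 E12 addr0 add0r.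
Qed.
Arguments comb_coef {V W} p q v w {phi psi} a.

Lemma ten_coef {V W : gmod F g} (p : C V) (q : C W) (v : V) (w : W) phi psi :
  du V phi -> du W psi ->
  exists T (r : C T) (u : T) chi, du T chi /\
    (forall m, isM C du m -> coef r u chi m = coef p v phi m * coef q w psi m) /\
    (forall x, isNat C du x -> tder x ->
        coef r u chi x = phi (x V p v) * psi w + phi v * psi (x W q w)).
Proof.
move=> Hphi Hpsi.
have [T [t [r Ht]]] := cat_ten p q.
have [chi [Hchi Hct]] := prod_fun Ht.1 (du_lin p Hphi) (du_lin q Hpsi).
exists T, r, (t v w), chi; split; first exact: (du_tensor p q r Ht _ _ _ Hphi Hpsi Hchi Hct).
split.
  by move=> m Hm; rewrite /coef (isM_mul Hm _ _ _ p q r t Ht) Hct.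
by move=> x Hx Htd; rewrite /coef (Htd _ _ _ p q r t Ht) (lfD Hchi) !Hct.
Qed.
Arguments ten_coef {V W} p q v w {phi psi}.

Lemma const_coef a : exists V0 (p0 : C V0) e phi, du V0 phi /\
  forall m, isM C du m -> coef p0 e phi m = a.
Proof.
have [V0 [p0 Htr]] := cat_triv.
have Htr' := Htr; move: Htr' => [[e [He _]] _].
have [phi0 [H0 Hne]] := du_sep p0 He.
exists V0, p0, e, (fun v => (a / phi0 e) * phi0 v); split; first exact: du_scale.
move=> m Hm; rewrite /coef Hm.2.2 //.
by rewrite divfK //; apply/eqP.
Qed.

Lemma inFM_ext {f h} : inFM C du f -> (forall m, isM C du m -> f m = h m) -> inFM C du h.
Proof.
move=> [V [p [v [phi [H E]]]]] E'; exists V, p, v, phi; split => // m Hm.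
by rewrite -E' // E.
Qed.
Lemma inFM_coef {V : gmod F g} (p : C V) v {phi} : du V phi -> inFM C du (coef p v phi).
Proof. by move=> H; exists V, p, v, phi. Qed.
Lemma inFM_const a : inFM C du (fun _ => a).
Proof.
have [V0 [p0 [e [phi [H E]]]]] := const_coef a.
by apply: inFM_ext (inFM_coef p0 e H) _ => m Hm; rewrite E.
Qed.
Lemma inFM_comb a {f h} : inFM C du f -> inFM C du h -> inFM C du (fun m => a * f m + h m).
Proof.
move=> [V [p [v [phi [H E]]]]] [W [q [w [psi [H' E']]]]].
have [D [r [u [chi [Hc Ec]]]]] := comb_coef p q v w a H H'.
apply: inFM_ext (inFM_coef r u Hc) _ => m Hm.
rewrite Ec; last exact: isM_Nat Hm.
by rewrite ?(E m Hm) ?(E' m Hm).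
Qed.
Lemma inFM_mul {f h} : inFM C du f -> inFM C du h -> inFM C du (fun m => f m * h m).
Proof.
move=> [V [p [v [phi [H E]]]]] [W [q [w [psi [H' E']]]]].
have [T [r [u [chi [Hc [Ec _]]]]]] := ten_coef p q v w H H'.
apply: inFM_ext (inFM_coef r u Hc) _ => m Hm.
rewrite Ec //.
by rewrite ?(E m Hm) ?(E' m Hm).
Qed.

Lemma gen_inFM h : FNat_gen F g C du h -> inFM C du h.
Proof.
elim=> {h}.
- exact: inFM_const.
- by move=> V p v phi H; apply: inFM_coef.
- move=> f h _ Hf _ Hh; apply: inFM_ext (inFM_comb 1 Hf Hh) _ => m _; by rewrite mul1r.
- by move=> f h _ Hf _ Hh; apply: inFM_mul.
Qed.

Lemma partb (f : NatT C -> F) : inFM C du f <-> exists h, inFNat C du h /\ agreeM C du f h.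
Proof.
split.
  move=> [V [p [v [phi [H E]]]]]; exists (coef p v phi); split => //.
  by exists (coef p v phi); split => //; apply: FG_coef.
move=> [h [[k [Hk Ek]] E]].
apply: inFM_ext (gen_inFM _ Hk) _ => m Hm.
by rewrite (E m Hm) (Ek m (isM_Nat Hm)).
Qed.


Lemma zid (Z : zmodType) (A B C' D A' D' : Z) :
  A + B + (C' + D) - (A' + C' + (B + D')) = (A - A') + (D - D').
Proof.
have E1 : A + B + (C' + D) = (B + C') + (A + D).
  by rewrite [A + B]addrC -addrA [A + (C' + D)]addrCA addrA.
have E2 : A' + C' + (B + D') = (B + C') + (A' + D').
  by rewrite [A' + C']addrC -addrA [A' + (B + D')]addrCA addrA [C' + B]addrC.
by rewrite E1 E2 opprD addrACA subrr add0r opprD addrACA.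
Qed.

Lemma isM_id : isM C du idN.
Proof. split; first exact: isNat_id. by split. Qed.

Lemma isM_comp m n : isM C du m -> isM C du n -> isM C du (compN m n).
Proof.
move=> Hm Hn; split; first exact: isNat_comp (isM_Nat Hm) (isM_Nat Hn).
split.
  move=> V W T p q r t Ht v w; rewrite /compN.
  by rewrite (isM_mul Hn _ _ _ p q r t Ht) (isM_mul Hm _ _ _ p q r t Ht).
by move=> V0 p0 Htr v; rewrite /compN Hn.2.2 // Hm.2.2.
Qed.

Definition SZ (h : NatT C -> F) :=
  (exists (V W T : gmod F g) (p : C V) (q : C W) (r : C T) (t : V -> W -> T) (v : V) (w : W)
     (phi : V -> F) (psi : W -> F) (chi : T -> F),
     tensor_obj t /\ du V phi /\ du W psi /\ du T chi /\ (forall v w, chi (t v w) = phi v * psi w) /\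
     h = (fun m => coef r (t v w) chi m - coef p v phi m * coef q w psi m))
  \/ (exists (V0 : gmod F g) (p0 : C V0) (v : V0) (phi : V0 -> F),
     trivial1 V0 /\ du V0 phi /\ h = (fun m => coef p0 v phi m - phi v)).

Lemma SZ_FNat h : SZ h -> inFNat C du h.
Proof.
case.
- move=> [V [W [T [p [q [r [t [v [w [phi [psi [chi [Ht [Hphi [Hpsi [Hchi [Hct ->]]]]]]]]]]]]]]]]].
  exists (fun m => coef r (t v w) chi m + (fun _ => -1) m * (coef p v phi m * coef q w psi m)).
  split; last by move=> m _; rewrite mulN1r.
  apply: FG_add; first exact: FG_coef.
  apply: FG_mul; first exact: FG_cst.
  by apply: FG_mul; apply: FG_coef.
- move=> [V0 [p0 [v [phi [Htr [Hphi ->]]]]]].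
  exists (fun m => coef p0 v phi m + (fun _ => - phi v) m); split; last by [].
  by apply: FG_add; [exact: FG_coef | exact: FG_cst].
Qed.

Lemma SZ_char m : isNat C du m -> (isM C du m <-> forall h, SZ h -> h m = 0).
Proof.
move=> Hm; split.
  move=> HM h [].
  - move=> [V [W [T [p [q [r [t [v [w [phi [psi [chi [Ht [Hphi [Hpsi [Hchi [Hct ->]]]]]]]]]]]]]]]]].
    by rewrite /coef (isM_mul HM _ _ _ p q r t Ht) Hct subrr.
  - move=> [V0 [p0 [v [phi [Htr [Hphi ->]]]]]].
    by rewrite /coef HM.2.2 // subrr.
move=> HS; split; first exact: Hm.
split.
  move=> V W T p q r t Ht v w.
  apply/eqP; rewrite -subr_eq0; apply/eqP.
  apply: (tensor_sep Ht.1 (fun phi H => du_lin p H) (fun psi H => du_lin q H)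
     (fun v' H => du_sep p H) (fun w' H => du_sep q H)).
  move=> phi psi chi Hphi Hpsi Hchi Hct.
  have Hdc := du_tensor p q r Ht _ _ _ Hphi Hpsi Hchi Hct.
  have H0 := HS (fun m => coef r (t v w) chi m - coef p v phi m * coef q w psi m) _.
  rewrite (lfB Hchi) Hct; apply: H0.
  by left; exists V, W, T, p, q, r, t, v, w, phi, psi, chi.
move=> V0 p0 Htr v.
apply: (sep_eq p0) => phi Hphi.
have := HS (fun m => coef p0 v phi m - phi v) _.
rewrite /coef => H; apply/eqP; rewrite -subr_eq0; apply/eqP; apply: H.
by right; exists V0, p0, v, phi.
Qed.


Definition T1lin (d : (NatT C -> F) -> F) := forall a f h, inFM C du f -> inFM C du h ->
  d (fun m => a * f m + h m) = a * d f + d h.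
Definition T1der (d : (NatT C -> F) -> F) := forall f h, inFM C du f -> inFM C du h ->
  d (fun m => f m * h m) = f idN * d h + h idN * d f.

Lemma d_lin {x d} : isNat C du x -> reprD C du d x -> T1lin d.
Proof.
move=> Hx [Hr Hc] a f h [V [p [v [phi [H E]]]]] [W [q [w [psi [H' E']]]]].
have [D [r [u [chi [Hch Ec]]]]] := comb_coef p q v w a H H'.
rewrite (Hr _ (coef r u chi)); last first.
  by move=> m Hm; rewrite (Ec m (isM_Nat Hm)) (E m Hm) (E' m Hm).
rewrite (Hr f (coef p v phi) E) (Hr h (coef q w psi) E') !Hc //.
exact: Ec x Hx.
Qed.

Lemma d_der {x d} : isNat C du x -> tder x -> reprD C du d x -> T1der d.
Proof.
move=> Hx Htd [Hr Hc] f h [V [p [v [phi [H E]]]]] [W [q [w [psi [H' E']]]]].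
have [T [r [u [chi [Hch [Em Ex]]]]]] := ten_coef p q v w H H'.
rewrite (Hr _ (coef r u chi)); last first.
  by move=> m Hm; rewrite (Em m Hm) (E m Hm) (E' m Hm).
rewrite (Hr f (coef p v phi) E) (Hr h (coef q w psi) E') !Hc //.
rewrite (E idN isM_id) (E' idN isM_id).
rewrite [LHS](Ex x Hx Htd) /coef /idN.
by rewrite addrC [psi w * _]mulrC.
Qed.

Lemma d_const d : T1lin d -> T1der d -> forall a, d (fun _ => a) = 0.
Proof.
move=> Hl Hd a.
have H1 : d (fun _ => 1) = 0.
  have := Hd (fun _ => 1) (fun _ => 1) (inFM_const 1) (inFM_const 1).
  have -> : (fun _ : NatT C => (1 : F) * 1) = (fun _ => 1).
    by apply: functional_extensionality => ?; rewrite mulr1.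
  rewrite !mul1r => E.
  by apply: (addrI (d (fun _ => 1))); rewrite addr0 -E.
have H0 : d (fun _ => 0) = 0.
  have := Hd (fun _ => 0) (fun _ => 0) (inFM_const 0) (inFM_const 0).
  have -> : (fun _ : NatT C => (0 : F) * 0) = (fun _ => 0).
    by apply: functional_extensionality => ?; rewrite mulr0.
  by rewrite !mul0r addr0.
have := Hl a (fun _ => 1) (fun _ => 0) (inFM_const 1) (inFM_const 0).
have -> : (fun _ : NatT C => a * 1 + 0) = (fun _ => a).
  by apply: functional_extensionality => ?; rewrite mulr1 addr0.
by rewrite H1 H0 mulr0 addr0.
Qed.


Lemma es_val x s (V : gmod F g) (p : C V) v :
  lincombN [:: idN; x] [:: 1; s] V p v = v + s *: x V p v.
Proof. by rewrite /lincombN /= big_ord_recl big_ord_recl big_ord0 addr0 /= scale1r. Qed.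

Lemma gen_poly {x d} : isNat C du x -> tder x -> reprD C du d x ->
  forall k, FNat_gen F g C du k -> exists P : {poly F},
    (forall s, P.[s] = k (lincombN [:: idN; x] [:: 1; s])) /\ P`_1 = d k /\ P`_0 = k idN.
Proof.
move=> Hx Htd Hd.
have Hl := d_lin Hx Hd; have Hdr := d_der Hx Htd Hd.
move=> k Hk; elim: Hk => {k}.
- move=> a; exists a%:P; split; first by move=> s; rewrite hornerC.
  by rewrite !coefC /= d_const.
- move=> V p v phi H; exists ((phi v)%:P + phi (x V p v) *: 'X); split.
    move=> s; rewrite hornerD hornerC hornerZ hornerX /coef es_val.
    by rewrite (lfD (du_lin p H)) (lfZ (du_lin p H)) mulrC.
  split.
    by rewrite coefD coefC coefZ coefX /= add0r mulr1 (Hd.2 V p v phi H).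
  by rewrite coefD coefC coefZ coefX /= mulr0 addr0.
- move=> f h Hf [P [HP [HP1 HP0]]] Hh [Q [HQ [HQ1 HQ0]]].
  exists (P + Q); split; first by move=> s; rewrite hornerD HP HQ.
  split; last by rewrite coefD HP0 HQ0.
  have := Hl 1 f h (gen_inFM _ Hf) (gen_inFM _ Hh).
  have -> : (fun m => 1 * f m + h m) = (fun m => f m + h m).
    by apply: functional_extensionality => ?; rewrite mul1r.
  by rewrite mul1r coefD HP1 HQ1 => ->.
- move=> f h Hf [P [HP [HP1 HP0]]] Hh [Q [HQ [HQ1 HQ0]]].
  exists (P * Q); split; first by move=> s; rewrite hornerM HP HQ.
  split; last by rewrite coefM big_ord_recl big_ord0 addr0 /= HP0 HQ0.
  rewrite (Hdr f h (gen_inFM _ Hf) (gen_inFM _ Hh)) coefM big_ord_recl big_ord_recl big_ord0 addr0 /=.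
  rewrite (_ : bump 0 0 = 1%N) // subn0 subnn.
  by rewrite HP0 HQ0 HP1 HQ1 [d f * _]mulrC.
Qed.

Hypothesis Hchar : [pchar F] =i pred0.

Lemma partc1 x d : isLieM C du x -> reprD C du d x -> isT1 C du d.
Proof.
move=> [Hx [Htd [Htr _]]] Hd.
have Hl := d_lin Hx Hd; have Hdr := d_der Hx Htd Hd.
split; first exact: Hd.1.
split; first exact: Hl.
split; first exact: Hdr.
pose us := [:: idN; x].
have Hus : forall i, (i < size us)%N -> isNat C du (nth idN us i).
  move=> [|[|i]] Hi; [exact: isNat_id | exact: Hx | by []].
have Hspan : forall u, inSpan us u -> isNat C du u.
  by move=> u [c ->]; apply: isNat_lincombN.
exists (fun h => inFNat C du h /\ forall u, inSpan us u -> h u = 0).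
split.
  split.
    split; first by move=> h [].
    split.
      split; last by [].
      by exists (fun _ => 0); split; [exact: FG_cst | by []].
    split.
      move=> h h' [[k [Hk Ek]] Hv] [[k' [Hk' Ek']] Hv']; split.
        exists (fun m => k m + k' m); split; first exact: FG_add.
        by move=> m Hm; rewrite Ek // Ek'.
      by move=> u Hu; rewrite Hv // Hv' // addr0.
    split.
      move=> h f [[k [Hk Ek]] Hv] [k' [Hk' Ek']]; split.
        exists (fun m => k' m * k m); split; first exact: FG_mul.
        by move=> m Hm; rewrite Ek // Ek'.
      by move=> u Hu; rewrite Hv // mulr0.
    move=> h h' [[k [Hk Ek]] Hv] E; split.
      by exists k; split => // m Hm; rewrite -E // Ek.
    by move=> u Hu; rewrite -E; [exact: Hv | exact: Hspan].
  by exists us; split; [exact: Hus | move=> h H1 H2; split].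
move=> h [[k [Hk Ek]] Hv].
have [P [HP [HP1 _]]] := gen_poly Hx Htd Hd _ Hk.
have P0 : P = 0.
  apply: (poly_zero Hchar) => s.
  rewrite HP -Ek; first by apply: Hv; exists [:: 1; s].
  by apply: Hspan; exists [:: 1; s].
rewrite (Hd.1 h k); first by rewrite -HP1 P0 coef0.
by move=> m Hm; exact: Ek m (isM_Nat Hm).
Qed.


Lemma partc2 x y d : isLieM C du x -> isLieM C du y -> reprD C du d x -> reprD C du d y -> x = y.
Proof.
move=> _ _ Hx Hy.
apply: functional_extensionality_dep => V; apply: functional_extensionality_dep => p.
apply: functional_extensionality => v.
apply: (sep_eq p) => phi H.
by rewrite -(Hx.2 V p v phi H) (Hy.2 V p v phi H).
Qed.

Lemma partc4 a x y : isLieM C du x -> isLieM C du y ->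
  isLieM C du (lincomb2 a x y) /\
  forall d d', reprD C du d x -> reprD C du d' y ->
    reprD C du (fun f => a * d f + d' f) (lincomb2 a x y).
Proof.
move=> [Hx [Htx [Hrx [dx Hdx]]]] [Hy [Hty [Hry [dy Hdy]]]].
have Hrep : forall d d', reprD C du d x -> reprD C du d' y ->
    reprD C du (fun f => a * d f + d' f) (lincomb2 a x y).
  move=> d d' [Hr Hc] [Hr' Hc']; split.
    by move=> f h E; rewrite (Hr f h E) (Hr' f h E).
  move=> V p v phi H.
  by rewrite Hc // Hc' // /lincomb2 (lfD (du_lin p H)) (lfZ (du_lin p H)).
split => //.
split; first exact: isNat_lincomb2.
split.
  move=> V W T p q r t Ht v w; rewrite /lincomb2 (Htx _ _ _ p q r t Ht) (Hty _ _ _ p q r t Ht).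
  have Hb := Ht.1.1.
  by rewrite (tlD Hb) (tlZ Hb) (trD Hb) (trZ Hb) scalerDr addrACA.
split.
  by move=> V0 p0 Htr v; rewrite /lincomb2 (Hrx V0 p0 Htr) (Hry V0 p0 Htr) scaler0 addr0.
by exists (fun f => a * dx f + dy f); apply: Hrep.
Qed.

Lemma partc5 x y : isLieM C du x -> isLieM C du y ->
  isLieM C du (brN x y) /\
  forall d d', reprD C du d x -> reprD C du d' y -> reprD C du (bracketT d d') (brN x y).
Proof.
move=> [Hx [Htx [Hrx [dx Hdx]]]] [Hy [Hty [Hry [dy Hdy]]]].
have Hrep : forall d d', reprD C du d x -> reprD C du d' y -> reprD C du (bracketT d d') (brN x y).
  move=> d d' [Hr Hc] [Hr' Hc']; split.
    move=> f h E; rewrite /bracketT /Dop; congr (_ - _).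
      apply: Hr => n Hn; apply: Hr' => k Hk; apply: E.
      by apply: isM_comp; [apply: isM_comp; [exact: isM_id | exact: Hn] | exact: Hk].
    apply: Hr' => n Hn; apply: Hr => k Hk; apply: E.
    by apply: isM_comp; [apply: isM_comp; [exact: isM_id | exact: Hn] | exact: Hk].
  move=> V p v phi H.
  have E1 : d (fun n => d' (fun k => coef p v phi (compN (compN idN n) k))) = phi (x V p (y V p v)).
    rewrite -(Hc V p (y V p v) phi H); apply: Hr => n Hn.
    exact: (Hc' V p v (phi \o n V p) (isNat_du p (isM_Nat Hn) H)).
  have E2 : d' (fun n => d (fun k => coef p v phi (compN (compN idN n) k))) = phi (y V p (x V p v)).
    rewrite -(Hc' V p (x V p v) phi H); apply: Hr' => n Hn.
    exact: (Hc V p v (phi \o n V p) (isNat_du p (isM_Nat Hn) H)).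
  rewrite /bracketT /Dop E1 E2 /brN.
  by rewrite (lfB (du_lin p H)).
split; last exact: Hrep.
split; first exact: isNat_brN.
split.
  move=> V W T p q r t Ht v w; have Hb := Ht.1.1.
  rewrite /brN.
  rewrite (Hty _ _ _ p q r t Ht) (Htx _ _ _ p q r t Ht).
  rewrite (lmD (isNat_lin r Hx)) (lmD (isNat_lin r Hy)).
  rewrite ?(Htx _ _ _ p q r t Ht) ?(Hty _ _ _ p q r t Ht).
  rewrite (tlB Hb) (trB Hb).
  by rewrite zid.
split.
  by move=> V0 p0 Htr v; rewrite /brN (Hrx V0 p0 Htr) (Hry V0 p0 Htr) subrr.
by exists (bracketT dx dy); apply: Hrep.
Qed.


Record cdat := CD { cV : gmod F g; cp : C cV; cv : cV; cphi : cV -> F; cdu : du cV cphi }.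
Definition cval (l : cdat) : NatT C -> F := coef (cp l) (cv l) (cphi l).
Definition cdcomb (a : F) (l1 l2 : cdat) : cdat :=
  epsilon (inhabits l1) (fun l => forall m, isNat C du m -> cval l m = a * cval l1 m + cval l2 m).
Lemma cdcomb_spec a l1 l2 : forall m, isNat C du m -> cval (cdcomb a l1 l2) m = a * cval l1 m + cval l2 m.
Proof.
apply: (epsilon_spec (inhabits l1) (fun l => forall m, isNat C du m -> cval l m = a * cval l1 m + cval l2 m)).
have [D [r [u [chi [Hc Ec]]]]] := comb_coef (cp l1) (cp l2) (cv l1) (cv l2) a (cdu l1) (cdu l2).
by exists (@CD D r u chi Hc).
Qed.

Lemma partc3 d : isT1 C du d -> exists x, isLieM C du x /\ reprD C du d x.
Proof.
move=> [Hr [Hl [Hdr [J [[HJi [us [Hus HJ]]] HJd]]]]].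
pose f := fun l : cdat => d (cval l).
pose G := fun (u : NatT C) (l : cdat) => cphi l (u (cV l) (cp l) (cv l)).
pose gs := map G us.
have Hf : clin cdcomb f.
  move=> a l1 l2; rewrite /f.
  rewrite (Hr _ (fun m => a * cval l1 m + cval l2 m)).
    by apply: Hl; [exact: (inFM_coef (cp l1) (cv l1) (cdu l1)) | exact: (inFM_coef (cp l2) (cv l2) (cdu l2))].
  by move=> m Hm; apply: cdcomb_spec; exact: isM_Nat.
have Hgs : forall i, clin cdcomb (nth (@g0 F cdat) gs i).
  move=> i; case: (ltnP i (size us)) => Hi.
    rewrite (nth_map idN) // => a l1 l2.
    exact: (cdcomb_spec a l1 l2 (nth idN us i) (Hus i Hi)).
  by rewrite nth_default ?size_map // => a l1 l2; rewrite /g0 mulr0 addr0.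
have Hker : forall l, (forall i, (i < size gs)%N -> nth (@g0 F cdat) gs i l = 0) -> f l = 0.
  move=> l Hl0; apply: HJd; apply: HJ.
    exists (cval l); split; last by [].
    exact: (FG_coef F g C du _ (cp l) (cv l) (cphi l) (cdu l)).
  move=> u [c' ->]; rewrite /cval /coef /lincombN (lf_sum (du_lin (cp l) (cdu l))).
  apply: big1 => i _; rewrite (lfZ (du_lin (cp l) (cdu l))).
  have := Hl0 i; rewrite size_map => /(_ (ltn_ord i)); rewrite (nth_map idN) // => E.
  by move: E; rewrite /G => ->; rewrite mulr0.
have [c Hc] := linalg Hf Hgs Hker.
pose x := lincombN us c.
have Hx : isNat C du x := isNat_lincombN us c Hus.
have Hrep : reprD C du d x.
  split => // V p v phi H.
  have := Hc (@CD V p v phi H); rewrite /f /cval /= => ->.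
  rewrite /x /lincombN (lf_sum (du_lin p H)) size_map; apply: eq_bigr => i _.
  by rewrite (nth_map idN) // (lfZ (du_lin p H)).
exists x; split => //.
split; first exact: Hx.
split.
  move=> V W T p q r t Ht v w.
  apply/eqP; rewrite -subr_eq0; apply/eqP.
  apply: (tensor_sep Ht.1 (fun phi H => du_lin p H) (fun psi H => du_lin q H)
     (fun v' H => du_sep p H) (fun w' H => du_sep q H)).
  move=> phi psi chi Hphi Hpsi Hchi Hct.
  have Hdc := du_tensor p q r Ht _ _ _ Hphi Hpsi Hchi Hct.
  rewrite (lfB Hchi) (lfD Hchi) !Hct.
  rewrite -(Hrep.2 T r (t v w) chi Hdc).
  rewrite (Hr _ (fun m => coef p v phi m * coef q w psi m)); last first.
    by move=> m Hm; rewrite /coef (isM_mul Hm _ _ _ p q r t Ht) Hct.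
  rewrite Hdr; [|exact: (inFM_coef p v Hphi)|exact: (inFM_coef q w Hpsi)].
  rewrite (Hrep.2 V p v phi Hphi) (Hrep.2 W q w psi Hpsi) /coef /idN.
  by ring.
split.
  move=> V0 p0 Htr v.
  apply: (sep_eq p0) => phi H.
  rewrite (lf0 (du_lin p0 H)) -(Hrep.2 V0 p0 v phi H).
  rewrite (Hr _ (fun _ => phi v)); first exact: d_const Hl Hdr (phi v).
  by move=> m Hm; rewrite /coef Hm.2.2.
by exists d.
Qed.


Lemma main_all :
  ((forall m, isM C du m -> isNat C du m) /\
   isM C du (@idN F g C) /\
   (forall m n, isM C du m -> isM C du n -> isM C du (compN m n)) /\
   (exists S : (NatT C -> F) -> Prop, (forall h, S h -> inFNat C du h) /\
      forall m, isNat C du m -> (isM C du m <-> forall h, S h -> h m = 0))) /\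
  (forall f : NatT C -> F, inFM C du f <-> exists h, inFNat C du h /\ agreeM C du f h) /\
  ((forall x d, isLieM C du x -> reprD C du d x -> isT1 C du d) /\
   (forall x y d, isLieM C du x -> isLieM C du y -> reprD C du d x -> reprD C du d y -> x = y) /\
   (forall d, isT1 C du d -> exists x, isLieM C du x /\ reprD C du d x) /\
   (forall (a : F) x y, isLieM C du x -> isLieM C du y ->
      isLieM C du (lincomb2 a x y) /\
      forall d d', reprD C du d x -> reprD C du d' y ->
        reprD C du (fun f => a * d f + d' f) (lincomb2 a x y)) /\
   (forall x y, isLieM C du x -> isLieM C du y ->
      isLieM C du (brN x y) /\
      forall d d', reprD C du d x -> reprD C du d' y -> reprD C du (bracketT d d') (brN x y))).
Proof.
split.
  split; first by move=> m; apply: isM_Nat.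
  split; first exact: isM_id.
  split; first exact: isM_comp.
  by exists SZ; split; [exact: SZ_FNat | exact: SZ_char].
split; first exact: partb.
split; first exact: partc1.
split; first exact: partc2.
split; first exact: partc3.
split; first exact: partc4.
exact: partc5.
Qed.

End Main.

Theorem theorem3p7 (F : fieldType) (g : lmodType F) (br : g -> g -> g)
  (C : gmod F g -> Prop) (du : forall V : gmod F g, (V -> F) -> Prop) :
  [pchar F] =i pred0 -> lie_algebra br -> category br C -> dual_cat C du ->
  (* (a) M is a Zariski closed submonoid of Nat *)
  ((forall m, isM C du m -> isNat C du m) /\
   isM C du (@idN F g C) /\
   (forall m n, isM C du m -> isM C du n -> isM C du (compN m n)) /\
   (exists S : (NatT C -> F) -> Prop, (forall h, S h -> inFNat C du h) /\
      forall m, isNat C du m -> (isM C du m <-> forall h, S h -> h m = 0))) /\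
  (* (b) F[M] is the restriction of F[Nat] to M *)
  (forall f : NatT C -> F, inFM C du f <-> exists h, inFNat C du h /\ agreeM C du f h) /\
  (* (c) x |-> delta_x is a Lie algebra isomorphism Lie(M) -> T_1 M *)
  ((forall x d, isLieM C du x -> reprD C du d x -> isT1 C du d) /\
   (forall x y d, isLieM C du x -> isLieM C du y -> reprD C du d x -> reprD C du d y -> x = y) /\
   (forall d, isT1 C du d -> exists x, isLieM C du x /\ reprD C du d x) /\
   (forall (a : F) x y, isLieM C du x -> isLieM C du y ->
      isLieM C du (lincomb2 a x y) /\
      forall d d', reprD C du d x -> reprD C du d' y ->
        reprD C du (fun f => a * d f + d' f) (lincomb2 a x y)) /\
   (forall x y, isLieM C du x -> isLieM C du y ->
      isLieM C du (brN x y) /\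
      forall d d', reprD C du d x -> reprD C du d' y -> reprD C du (bracketT d d') (brN x y))).
Proof.
move=> Hchar _ Hcat Hdu.
exact: (main_all F g br C du Hcat Hdu Hchar).
Qed.
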